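(* Let $f$ be a norm on $\mathbb{R}^n$ and let $\alpha=(\alpha_1,\dots,\alpha_n)\in\mathbb{R}^n$ satisfy $\dim_{\mathbb{Z}}(1,\alpha_1,\dots,\alpha_n)\ge 3$. Let $\tau_\nu=(p_\nu,a_\nu)$ be the sequence of $f$-best simultaneous approximations to $\alpha$ and $\xi_\nu=\alpha p_\nu-a_\nu$. Then $$f(\xi_\nu)\,p_{\nu+1}\to+\infty\quad(\nu\to+\infty).$$
   Context: A norm $f$ here is a continuous function $\mathbb{R}^n\to\mathbb{R}_+$ with $f(x)=0\iff x=0$, $f(-x)=f(x)$, $f(tx)=tf(x)$ for $t\ge0$, and convex unit ball $B_f^1=\{y:f(y)\le1\}$ with $0$ in its interior. For $\alpha\in\mathbb{R}^n$, an $f$-best simultaneous approximation is an integer point $\tau=(p,a_1,\dots,a_n)\in\mathbb{Z}^{n+1}$ with $p\ge1$ such that $f(\alpha q-b)>f(\alpha p-a)$ for all $(q,b)\in\mathbb{Z}^{n+1}$ with $1\le q\le p-1$ and for all $(p,b)$ with $b\ne a$. They form a sequence $\tau_\nu=(p_\nu,a_\nu)$ with $p_1<p_2<\dots$ and $f(\alpha p_1-a_1)>f(\alpha p_2-a_2)>\dots$ (infinite when $\alpha\notin\mathbb{Q}^n$). $\dim_{\mathbb{Z}}(1,\alpha_1,\dots,\alpha_n)$ is the maximal number of elements among $1,\alpha_1,\dots,\alpha_n$ linearly independent over $\mathbb{Z}$. *)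

(* Defs.v *)
From HB Require Import structures.
From mathcomp Require Import all_boot all_order all_algebra.
From mathcomp Require Import all_classical all_reals all_analysis.
Set Implicit Arguments. Unset Strict Implicit. Unset Printing Implicit Defensive.
Import Order.TTheory GRing.Theory Num.Theory.
Import numFieldNormedType.Exports.
Local Open Scope classical_set_scope.
Local Open Scope ring_scope.

Definition unit_ball (R : realType) (n : nat) (f : 'rV[R]_n -> R) : set 'rV[R]_n :=
  [set y | f y <= 1].

Definition convex_subset (R : realType) (n : nat) (A : set 'rV[R]_n) : Prop :=
  forall x y (t : R), A x -> A y -> 0 <= t -> t <= 1 -> A (t *: x + (1 - t) *: y).

Definition is_norm (R : realType) (n : nat) (f : 'rV[R]_n -> R) : Prop :=
  continuous f /\
  (forall x, 0 <= f x) /\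
  (forall x, f x = 0 <-> x = 0) /\
  (forall x, f (- x) = f x) /\
  (forall (t : R) x, 0 <= t -> f (t *: x) = t * f x) /\
  convex_subset (unit_ball f) /\
  (interior (unit_ball f)) 0.

Definition approx_err (R : realType) (n : nat) (alpha : 'rV[R]_n) (q : nat)
    (b : 'rV[int]_n) : 'rV[R]_n :=
  q%:R *: alpha - map_mx (fun z : int => z%:~R) b.

Definition best_approx (R : realType) (n : nat) (f : 'rV[R]_n -> R)
    (alpha : 'rV[R]_n) (p : nat) (a : 'rV[int]_n) : Prop :=
  [/\ (1 <= p)%N,
      (forall (q : nat) (b : 'rV[int]_n), (1 <= q <= p - 1)%N ->
          f (approx_err alpha p a) < f (approx_err alpha q b))
    & (forall b : 'rV[int]_n, b <> a ->
          f (approx_err alpha p a) < f (approx_err alpha p b))].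

Definition one_alpha (R : realType) (n : nat) (alpha : 'rV[R]_n) : 'I_n.+1 -> R :=
  fun i => match unlift ord0 i with None => 1 | Some j => alpha 0 j end.

(* dim_Z(x_0, ..., x_{m-1}) >= k : some k elements of the family are
   linearly independent over Z *)
Definition dimZ_ge (R : realType) (m : nat) (x : 'I_m -> R) (k : nat) : Prop :=
  exists S : {set 'I_m}, (k <= #|S|)%N /\
    forall c : 'I_m -> int,
      \sum_(i in S) (c i)%:~R * x i = 0 -> forall i, i \in S -> c i = 0.

(* Main.v *)
Require Import Defs.
From HB Require Import structures.
From mathcomp Require Import all_boot all_order all_algebra.
From mathcomp Require Import all_classical all_reals all_analysis.
From mathcomp Require Import zify ring lra.
Import Order.TTheory GRing.Theory Num.Theory.
Import numFieldNormedType.Exports.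
Local Open Scope classical_set_scope.
Local Open Scope ring_scope.
Section S.
Variables (R : realType) (n : nat) (f : 'rV[R]_n -> R).
Hypothesis hf : is_norm f.

Lemma f_ge0 x : 0 <= f x.
Proof. case: hf => _ [H _]; exact: H. Qed.
Lemma f_eq0 x : f x = 0 <-> x = 0.
Proof. case: hf => _ [_ [H _]]; exact: H. Qed.
Lemma fN x : f (- x) = f x.
Proof. case: hf => _ [_ [_ [H _]]]; exact: H. Qed.
Lemma fZ t x : 0 <= t -> f (t *: x) = t * f x.
Proof. case: hf => _ [_ [_ [_ [H _]]]]; exact: H. Qed.
Lemma f_conv : convex_subset (unit_ball f).
Proof. case: hf => _ [_ [_ [_ [_ [H _]]]]]; exact: H. Qed.

Lemma f0 : f 0 = 0.
Proof. exact/(f_eq0 0).2. Qed.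

Lemma f_gt0 {x} : x != 0 -> 0 < f x.
Proof. by move=> x0; rewrite lt_neqAle f_ge0 andbT eq_sym; apply/eqP => /f_eq0; apply/eqP. Qed.

Lemma f_tri x y : f (x + y) <= f x + f y.
Proof.
have [->|x0] := eqVneq x 0; first by rewrite add0r f0 add0r.
have [->|y0] := eqVneq y 0; first by rewrite addr0 f0 addr0.
have fx := f_gt0 x0.
have fy := f_gt0 y0.
set s := f x + f y.
have s0 : 0 < s by rewrite addr_gt0.
have hx : unit_ball f ((f x)^-1 *: x).
  by rewrite /unit_ball /= fZ ?mulVf ?gt_eqF // invr_ge0 ltW.
have hy : unit_ball f ((f y)^-1 *: y).
  by rewrite /unit_ball /= fZ ?mulVf ?gt_eqF // invr_ge0 ltW.
have t0 : 0 <= f x / s by rewrite divr_ge0 ?ltW.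
have t1 : f x / s <= 1 by rewrite ler_pdivrMr // mul1r lerDl ltW.
have := f_conv _ _ _ hx hy t0 t1.
have -> : 1 - f x / s = f y / s.
  by rewrite /s; field; rewrite gt_eqF.
have -> : (f x / s) *: ((f x)^-1 *: x) + (f y / s) *: ((f y)^-1 *: y) = s^-1 *: (x + y).
  by rewrite !scalerA mulrAC mulfV ?gt_eqF // mul1r mulrAC mulfV ?gt_eqF // mul1r scalerDr.
rewrite /unit_ball /= fZ; last by rewrite invr_ge0 ltW.
by rewrite ler_pdivrMl // mulr1.
Qed.

Lemma entry_le_norm (x : 'rV[R]_n) i : `|x 0 i| <= `|x|.
Proof.
rewrite [leRHS]/Num.norm /= mx_normrE; apply/bigmax_geP; right => /=.
by exists (0, i).
Qed.

Lemma f_lower : exists2 K : R, 0 < K & forall (x : 'rV[R]_n) (i : 'I_n), `|x 0 i| <= K * f x.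
Proof.
have [n0|npos] := posnP n.
  by exists 1 => // x i; have := ltn_ord i; rewrite {2}n0.
pose i0 : 'I_n := Ordinal npos.
pose A := [set x : 'rV[R]_n | `|x| = 1].
have A0 : A !=set0.
  pose x1 : 'rV[R]_n := const_mx 1.
  have nx1 : 0 < `|x1|.
    by apply: lt_le_trans (entry_le_norm x1 i0); rewrite mxE normr1.
  exists (`|x1|^-1 *: x1); rewrite /A /= normrZ normrV ?unitfE ?gt_eqF //.
  by rewrite normr_id mulVf ?gt_eqF.
have cA : compact A.
  apply: bounded_closed_compact.
    have hb : \forall M \near +oo, globally A [set x : 'rV[R]_n | `|x| <= M].
      near=> M => x /= ->.
      near: M; exact: nbhs_pinfty_ge.
    exact: hb.
  apply: (preimage_closed (f := fun x : 'rV[R]_n => `|x|) (D := [set (1:R)])); last exact: closed_eq.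
  move=> x _; exact: norm_continuous.
have cf : {within A, continuous f}.
  by apply: continuous_subspaceT; case: hf.
have [c cA' minc] := EVT_min_rV A0 cA cf.
have c1 : `|c| = 1 by move: cA'; rewrite inE.
have c0 : c != 0 by apply/eqP => c0; move: c1; rewrite c0 normr0; apply/eqP; rewrite eq_sym oner_eq0.
have fc := f_gt0 c0.
exists (f c)^-1; first by rewrite invr_gt0.
move=> x i.
have [->|x0] := eqVneq x 0; first by rewrite mxE normr0 f0 mulr0.
have nx : 0 < `|x| by rewrite normr_gt0.
have : f c <= f (`|x|^-1 *: x).
  apply: minc; rewrite inE /A /= normrZ normrV ?unitfE ?gt_eqF // normr_id.
  by rewrite mulVf ?gt_eqF.
rewrite fZ; last by rewrite invr_ge0 ltW.
move=> h.
apply: le_trans (entry_le_norm x i) _.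
have := ler_wpM2l (ltW nx) h; rewrite mulrA mulfV ?gt_eqF // mul1r => h2.
by rewrite -(ler_pM2r fc) mulrAC mulVf ?gt_eqF // mul1r.
Unshelve. all: by end_near.
Qed.
End S.
Lemma orth3 (u1 u2 u3 v1 v2 v3 : int) : exists c1 c2 c3 : int,
  ~ [/\ c1 = 0, c2 = 0 & c3 = 0] /\ c1*u1+c2*u2+c3*u3 = 0 /\ c1*v1+c2*v2+c3*v3 = 0.
Proof.
have [h|h] := eqVneq (u2*v3 - u3*v2) 0; last first.
  exists (u2*v3 - u3*v2), (u3*v1 - u1*v3), (u1*v2 - u2*v1).
  split; first by case=> h1; move: h; rewrite h1 eqxx.
  by split; ring.
have [h'|h'] := eqVneq (u3*v1 - u1*v3) 0; last first.
  exists (u2*v3 - u3*v2), (u3*v1 - u1*v3), (u1*v2 - u2*v1).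
  split; first by case=> _ h1; move: h'; rewrite h1 eqxx.
  by split; ring.
have [h''|h''] := eqVneq (u1*v2 - u2*v1) 0; last first.
  exists (u2*v3 - u3*v2), (u3*v1 - u1*v3), (u1*v2 - u2*v1).
  split; first by case=> _ _ h1; move: h''; rewrite h1 eqxx.
  by split; ring.
have [a1|a1] := eqVneq u1 0; last first.
  exists u2, (- u1), 0; split; first by case=> _ b; move: a1; rewrite -oppr_eq0 b eqxx.
  split; first ring. by rewrite mul0r addr0 -[RHS]oppr0 -h''; ring.
have [a2|a2] := eqVneq u2 0; last first.
  exists u2, (- u1), 0; split; first by case=> b; move: a2; rewrite b eqxx.
  split; first ring. by rewrite mul0r addr0 -[RHS]oppr0 -h''; ring.
have [a3|a3] := eqVneq u3 0; last first.
  exists u3, 0, (- u1); split; first by case=> b; move: a3; rewrite b eqxx.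
  split; first ring. by rewrite mul0r addr0 -h'; ring.
subst.
have [b1|b1] := eqVneq v1 0; last first.
  exists v2, (- v1), 0; split; first by case=> _ b; move: b1; rewrite -oppr_eq0 b eqxx.
  by split; ring.
have [b2|b2] := eqVneq v2 0; last first.
  exists v2, (- v1), 0; split; first by case=> b; move: b2; rewrite b eqxx.
  by split; ring.
have [b3|b3] := eqVneq v3 0; last first.
  exists v3, 0, (- v1); split; first by case=> b; move: b3; rewrite b eqxx.
  by split; ring.
subst; exists 1, 0, 0; split; first by case.
by split; ring.
Qed.

Section Alg.
Variables (R : realType) (n : nat) (alpha : 'rV[R]_n).

Definition Prel (m : 'rV[int]_n) := m != 0 /\ forall i j : 'I_n, exists w : int,
  (m 0 j)%:~R * alpha 0 i - (m 0 i)%:~R * alpha 0 j = w%:~R.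

Lemma noP : dimZ_ge (one_alpha alpha) 3 -> forall m, ~ Prel m.
Proof.
move=> [S [hS indep]] m [m0 hm].
have [j0 mj0] : exists j0, m 0 j0 != 0.
  case: (pselect (exists j0, m 0 j0 != 0)) => [//|nE]; exfalso.
  move/negP: m0; apply; apply/eqP/matrixP => i j; rewrite mxE ord1.
  by apply/eqP; apply: contra_notT nE => h; exists j.
set mu := m 0 j0.
have rep : forall s : 'I_n.+1, exists U V : int,
    mu%:~R * one_alpha alpha s = V%:~R * alpha 0 j0 + U%:~R.
  move=> s; rewrite /one_alpha; case: unliftP => [j|] _.
    have [w hw] := hm j j0; exists w, (m 0 j).
    by rewrite -hw addrC subrK.
  by exists mu, 0; rewrite mulr1 mulr0z mul0r add0r.
have /card_gt2P [s1 [s2 [s3 [[i1 i2 i3] [d12 d23 d31]]]]] : (2 < #|S|)%N by [].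
have [U1 [V1 e1]] := rep s1.
have [U2 [V2 e2]] := rep s2.
have [U3 [V3 e3]] := rep s3.
have [c1 [c2 [c3 [cnz [hU hV]]]]] := orth3 U1 U2 U3 V1 V2 V3.
pose c s := if s == s1 then c1 else if s == s2 then c2 else if s == s3 then c3 else 0.
have cs1 : c s1 = c1 by rewrite /c eqxx.
have cs2 : c s2 = c2 by rewrite /c eq_sym (negbTE d12) eqxx.
have cs3 : c s3 = c3 by rewrite /c (negbTE d31) eq_sym (negbTE d23) eqxx.
have sum0 : \sum_(i in S) (c i)%:~R * one_alpha alpha i = 0.
  rewrite (bigD1 s1) //= (bigD1 s2) /=; last by rewrite i2 eq_sym d12.
  rewrite (bigD1 s3) /=; last by rewrite i3 d31 eq_sym d23.
  rewrite big1; last first.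
    move=> i /andP[/andP[/andP[_ a] b] d].
    by rewrite /c (negbTE a) (negbTE b) (negbTE d) mulr0z mul0r.
  rewrite cs1 cs2 cs3 addr0.
  have muR0 : (mu%:~R : R) != 0 by rewrite intr_eq0.
  apply: (mulfI muR0); rewrite mulr0.
  set x1 := one_alpha alpha s1; set x2 := one_alpha alpha s2; set x3 := one_alpha alpha s3.
  have -> : mu%:~R * ((c1)%:~R * x1 + ((c2)%:~R * x2 + (c3)%:~R * x3)) =
     (c1)%:~R * (mu%:~R * x1) + (c2)%:~R * (mu%:~R * x2) + (c3)%:~R * (mu%:~R * x3) :> R by ring.
  rewrite e1 e2 e3.
  have eU : (c1*U1+c2*U2+c3*U3)%:~R = 0 :> R by rewrite hU.
  have eV : (c1*V1+c2*V2+c3*V3)%:~R = 0 :> R by rewrite hV.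
  rewrite !rmorphD !rmorphM /= in eU eV.
  set b := alpha 0 j0.
  transitivity (((c1)%:~R * (V1)%:~R + (c2)%:~R * (V2)%:~R + (c3)%:~R * (V3)%:~R) * b +
     ((c1)%:~R * (U1)%:~R + (c2)%:~R * (U2)%:~R + (c3)%:~R * (U3)%:~R) : R); first by ring.
  by rewrite eU eV mul0r addr0.
apply: cnz; split.
- by rewrite -cs1; apply: indep.
- by rewrite -cs2; apply: indep.
- by rewrite -cs3; apply: indep.
Qed.
End Alg.

Section Eps.
Variables (R : realType) (n : nat) (alpha : 'rV[R]_n).

Definition Qrel (m : 'rV[int]_n) (e : R) := m != 0 /\ forall i j : 'I_n, exists w : int,
  `|(m 0 j)%:~R * alpha 0 i - (m 0 i)%:~R * alpha 0 j - w%:~R| <= e.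

Lemma Q_mono m e e' : e <= e' -> Qrel m e -> Qrel m e'.
Proof.
move=> le [m0 h]; split => // i j; have [w hw] := h i j.
by exists w; apply: le_trans le.
Qed.

Lemma Q_to_P m : (forall e, 0 < e -> Qrel m e) -> Prel _ _ alpha m.
Proof.
move=> hQ; have [m0 _] := hQ 1 ltr01; split => // i j.
set r := _ - _.
have t0 : (0 : R) < 1/3 by rewrite divr_gt0.
have [w1 hw1] := (hQ _ t0).2 i j.
exists w1; apply/eqP; rewrite -subr_eq0 -normr_le0.
apply/ler_addgt0Pr => e e0; rewrite add0r.
have e'0 : 0 < Num.min e (1/3) by rewrite lt_min e0 t0.
have [w' hw'] := (hQ _ e'0).2 i j.
rewrite -/r in hw1 hw'.
have ww : w1 = w'.
  have : `|(w1 - w')%:~R : R| < 1.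
    rewrite rmorphB /=.
    have -> : (w1%:~R - w'%:~R : R) = (r - w'%:~R) - (r - w1%:~R) by ring.
    apply: le_lt_trans (ler_normB _ _) _.
    have : `|r - w'%:~R| <= 1/3 by apply: le_trans hw' _; rewrite ge_min lexx orbT.
    lra.
  rewrite -intr_norm ltrz1 => h; lia.
rewrite ww; apply: le_trans hw' _; by rewrite ge_min lexx.
Qed.

Lemma notP_eps m : ~ Prel _ _ alpha m -> exists e, 0 < e /\ forall e', e' <= e -> ~ Qrel m e'.
Proof.
move=> nP.
case: (pselect (exists e, 0 < e /\ ~ Qrel m e)) => [[e [e0 nQ]]|nE].
  by exists e; split => // e' le /(Q_mono _ _ _ le).
exfalso; apply: nP; apply: Q_to_P => e e0.
case: (pselect (Qrel m e)) => // nq; exfalso; apply: nE; by exists e.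
Qed.

Lemma fin_unif (T : finType) (P : T -> R -> Prop) :
  (forall t, exists e, 0 < e /\ forall e', e' <= e -> ~ P t e') ->
  exists e, 0 < e /\ forall t e', e' <= e -> ~ P t e'.
Proof.
move=> h.
suff : forall s : seq T, exists e, 0 < e /\ forall t, t \in s -> forall e', e' <= e -> ~ P t e'.
  case/(_ (enum T)) => e [e0 he]; exists e; split => // t; apply: he; by rewrite mem_enum.
elim => [|t s [e [e0 he]]]; first by exists 1.
have [et [et0 het]] := h t.
exists (Num.min e et); split; first by rewrite lt_min e0 et0.
move=> t'; rewrite inE => /orP[/eqP->|ts] e'; rewrite le_min => /andP[l1 l2].
  exact: het.
exact: he.
Qed.
End Eps.

Theorem theorem2p2 (R : realType) (n : nat) (f : 'rV[R]_n -> R)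
    (alpha : 'rV[R]_n) (p : nat -> nat) (a : nat -> 'rV[int]_n) :
  is_norm f ->
  dimZ_ge (one_alpha alpha) 3 ->
  (* (p_nu, a_nu) is the sequence of all f-best approximations, ordered by p *)
  (forall nu, best_approx f alpha (p nu) (a nu)) ->
  (forall nu, (p nu < p nu.+1)%N) ->
  (forall q b, best_approx f alpha q b -> exists nu, q = p nu /\ b = a nu) ->
  (fun nu => f (approx_err alpha (p nu) (a nu)) * (p nu.+1)%:R) @ \oo --> +oo.
Proof.
move=> hf hdim hb hinc _.
set xi := fun nu => approx_err alpha (p nu) (a nu).
have p1 : forall nu, (1 <= p nu)%N by move=> nu; case: (hb nu).
have pge : forall nu, (nu <= p nu)%N.
  elim => [//|nu IH]; have := hinc nu; lia.
have dec : forall nu, f (xi nu.+1) < f (xi nu).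
  move=> nu; case: (hb nu.+1) => _ h _; apply: h.
  have := p1 nu; have := hinc nu; lia.
have le0 : forall nu, f (xi nu) <= f (xi 0).
  elim => [//|nu IH]; exact: le_trans (ltW (dec nu)) IH.
have [K K0 hK] := f_lower _ _ _ hf.
pose m nu : 'rV[int]_n := (p nu)%:Z *: a nu.+1 - (p nu.+1)%:Z *: a nu.
have mR : forall nu, map_mx (fun z : int => z%:~R) (m nu) =
    (p nu.+1)%:R *: xi nu - (p nu)%:R *: xi nu.+1 :> 'rV[R]_n.
  move=> nu; apply/matrixP => i j; rewrite /xi /approx_err !mxE.
  rewrite rmorphB !rmorphM /= -!pmulrn; ring.
have pR : forall nu, (0 : R) < (p nu)%:R by move=> nu; rewrite ltr0n; exact: p1.
have key : forall nu, (p nu)%:R * f (xi nu.+1) < (p nu.+1)%:R * f (xi nu).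
  move=> nu; apply: lt_le_trans (_ : (p nu)%:R * f (xi nu) <= _).
    by rewrite ltr_pM2l.
  by rewrite ler_wpM2r ?(f_ge0 _ _ _ hf) // ler_nat ltnW.
have fm : forall nu, f (map_mx (fun z : int => z%:~R) (m nu)) <= 2 * ((p nu.+1)%:R * f (xi nu)).
  move=> nu; rewrite mR; apply: le_trans (f_tri _ _ _ hf _ _) _.
  rewrite (fN _ _ _ hf) !(fZ _ _ _ hf) ?ler0n //; have := key nu; lra.
have m0 : forall nu, m nu != 0.
  move=> nu; apply/eqP => h; have := mR nu; rewrite h.
  have -> : map_mx (fun z : int => z%:~R) 0 = 0 :> 'rV[R]_n.
    by apply/matrixP => i j; rewrite !mxE.
  move/eqP; rewrite eq_sym subr_eq0 => /eqP e.
  have := congr1 f e; rewrite !(fZ _ _ _ hf) ?ler0n // => e'.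
  by have := key nu; rewrite e' ltxx.
rewrite cvgryPge => A.
pose C := 2 * K * A.
pose B : nat := `|Num.floor C|%N.
pose T := {ffun 'I_n -> 'I_(2 * B).+1}.
pose dc (t : T) : 'rV[int]_n := \row_j (((t j : nat) : int) - B%:Z).
have [e [e0 he]] : exists e : R, 0 < e /\ forall (t : T) e', e' <= e -> ~ Qrel _ _ alpha (dc t) e'.
  apply: (@fin_unif R T (fun t e' => Qrel _ _ alpha (dc t) e')) => t.
  apply: notP_eps; exact: noP hdim (dc t).
pose E := 2 * C * (K * f (xi 0)).
pose N := (Num.trunc (E / e)).+1.
exists N => // nu /= hnu.
rewrite leNgt; apply/negP => bad.
have fmA : f (map_mx (fun z : int => z%:~R) (m nu)) <= 2 * A.
  apply: le_trans (fm nu) _; rewrite mulrC in bad; lra.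
have mb : forall j, `|(m nu 0 j)%:~R : R| <= C.
  move=> j; have := hK (map_mx (fun z : int => z%:~R) (m nu)) j; rewrite mxE => h.
  apply: le_trans h _; have -> : C = K * (2 * A) by rewrite /C; ring.
  by apply: ler_wpM2l; [exact: ltW|].
have mbz : forall j, `|m nu 0 j| <= B%:Z.
  move=> j; have := mb j; rewrite -intr_norm -floor_ge_int /B => h.
  by apply: le_trans h _; rewrite abszE ler_norm.
have [t ht] : exists t : T, dc t = m nu.
  exists [ffun j => inord (absz (m nu 0 j + B%:Z))].
  apply/matrixP => i j.
  have -> : i = 0 by apply/val_inj => /=; case: i => [[|k]] //=.
  rewrite mxE ffunE inordK; have := mbz j; lia.
have hE : E / (p nu)%:R <= e.
  rewrite ler_pdivrMr //.
  have h1 := truncnS_gt (E / e).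
  have h2 : ((Num.trunc (E / e)).+1%:R : R) <= (p nu)%:R.
    by rewrite ler_nat; have := pge nu; rewrite /N in hnu; lia.
  have := lt_le_trans h1 h2; rewrite ltr_pdivrMr // => h3.
  by rewrite mulrC ltW.
apply: (he t _ hE); rewrite ht; split; first exact: m0 nu.
move=> i j; exists (a nu.+1 0 j * a nu 0 i - a nu.+1 0 i * a nu 0 j).
have id : (m nu 0 j)%:~R * alpha 0 i - (m nu 0 i)%:~R * alpha 0 j -
    (a nu.+1 0 j * a nu 0 i - a nu.+1 0 i * a nu 0 j)%:~R =
    ((m nu 0 j)%:~R * xi nu 0 i - (m nu 0 i)%:~R * xi nu 0 j) / (p nu)%:R.
  rewrite /xi /approx_err /m !mxE !rmorphB !rmorphM /= -!pmulrn.
  by field; rewrite gt_eqF.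
rewrite id normrM normfV (gtr0_norm (pR nu)) ler_pM2r ?invr_gt0 //.
have bx : forall k, `|xi nu 0 k| <= K * f (xi 0).
  move=> k; exact: le_trans (hK _ k) (ler_wpM2l (ltW K0) (le0 nu)).
apply: le_trans (ler_normB _ _) _; rewrite !normrM.
have b1 : `|(m nu 0 j)%:~R : R| * `|xi nu 0 i| <= C * (K * f (xi 0)).
  by apply: ler_pM.
have b2 : `|(m nu 0 i)%:~R : R| * `|xi nu 0 j| <= C * (K * f (xi 0)).
  by apply: ler_pM.
rewrite /E; lra.
Qed.
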